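(* Let $G$ be an infinite abelian group and $\mathcal S_G$ the family of small subsets of $G$. (1) If $G$ is finitely generated, then $\mathcal S_G$ is strongly invariant. (2) If $G$ is an infinitely generated free abelian group, then $\mathcal S_G$ is not auto-invariant.
   Context: A subset $L$ of a group $G$ is large if $G=FL$ for some finite $F\subset G$; $A\subset G$ is small if $L\setminus A$ is large for every large $L\subset G$. For an isomorphism $h:H\to K$ between subgroups of $G$, a family $\mathcal F\subset\mathcal P_G$ is $h$-invariant if for every $A\subset H$: $A\in\mathcal F$ iff $h(A)\in\mathcal F$. A left-invariant family $\mathcal F$ (i.e. $xF\in\mathcal F$ for $F\in\mathcal F$, $x\in G$) is auto-invariant if it is $h$-invariant for every injective homomorphism $h:G\to G$, and strongly invariant if it is $h$-invariant for every isomorphism $h:H\to K$ between subgroups of $G$. *)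

(* Defs.v *)
From HB Require Import structures.
From mathcomp Require Import all_boot all_order all_algebra.
Set Implicit Arguments. Unset Strict Implicit. Unset Printing Implicit Defensive.
Import GRing.Theory.
Local Open Scope ring_scope.

Section Defs.
Variable G : zmodType.

Definition subset_family := (G -> Prop) -> Prop.

Definition infinite_group : Prop := ~ exists s : seq G, forall g : G, g \in s.

(* L is large iff G = F + L for some finite F (additive notation for FL) *)
Definition large (L : G -> Prop) : Prop :=
  exists F : seq G, forall g : G, exists2 x, x \in F & exists l, L l /\ g = x + l.

Definition small (A : G -> Prop) : Prop :=
  forall L : G -> Prop, large L -> large (fun x => L x /\ ~ A x).

Definition small_family : subset_family := small.

Definition translate (x : G) (A : G -> Prop) : G -> Prop :=
  fun y => exists2 a, A a & y = x + a.

Definition left_invariant (F : subset_family) : Prop :=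
  forall A x, F A -> F (translate x A).

Definition image (h : G -> G) (A : G -> Prop) : G -> Prop :=
  fun y => exists2 a, A a & y = h a.

Definition is_subgroup (H : G -> Prop) : Prop :=
  H 0 /\ forall x y, H x -> H y -> H (x - y).

Definition subgroup_iso (H K : G -> Prop) (h : G -> G) : Prop :=
  (forall x y, H x -> H y -> h (x + y) = h x + h y) /\
  (forall x y, H x -> H y -> h x = h y -> x = y) /\
  (forall x, H x -> K (h x)) /\
  (forall y, K y -> exists2 x, H x & y = h x).

Definition h_invariant (H : G -> Prop) (h : G -> G) (F : subset_family) : Prop :=
  forall A : G -> Prop, (forall a, A a -> H a) -> (F A <-> F (image h A)).

Definition auto_invariant (F : subset_family) : Prop :=
  left_invariant F /\
  forall h : G -> G, (forall x y, h (x + y) = h x + h y) -> injective h ->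
    h_invariant (fun _ => True) h F.

Definition strongly_invariant (F : subset_family) : Prop :=
  left_invariant F /\
  forall (H K : G -> Prop) (h : G -> G), is_subgroup H -> is_subgroup K ->
    subgroup_iso H K h -> h_invariant H h F.

Definition finitely_generated : Prop :=
  exists s : seq G, forall g : G,
    exists z : 'I_(size s) -> int, g = \sum_(i < size s) s`_i *~ z i.

Definition free_basis (B : G -> Prop) : Prop :=
  (forall g : G, exists (s : seq G) (z : 'I_(size s) -> int),
      (forall x, x \in s -> B x) /\ g = \sum_(i < size s) s`_i *~ z i) /\
  (forall (s : seq G) (z : 'I_(size s) -> int),
      uniq s -> (forall x, x \in s -> B x) ->
      \sum_(i < size s) s`_i *~ z i = 0 -> forall i, z i = 0).

Definition free_abelian : Prop := exists B, free_basis B.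

End Defs.

(* Main.v *)
Require Import Defs.
From HB Require Import structures.
From mathcomp Require Import all_boot all_order all_algebra.
From Stdlib Require Import Classical ClassicalEpsilon Lia.
Set Implicit Arguments. Unset Strict Implicit. Unset Printing Implicit Defensive.
Import GRing.Theory.
Local Open Scope ring_scope.

Section Gen.
Variable G : zmodType.
Implicit Types (S L A B : G -> Prop) (F : seq G) (g : G).

Definition largeS S L := exists F : seq G, forall g, S g ->
  exists2 x, x \in F & exists l, L l /\ g = x + l.
Definition smallS S A := forall L, (forall l, L l -> S l) -> largeS S L ->
  largeS S (fun x => L x /\ ~ A x).

Lemma large_S L : large L <-> largeS (fun _ => True) L.
Proof. split=> [[F HF]|[F HF]]; exists F => g //; exact: HF. Qed.

Lemma small_S A : small A <-> smallS (fun _ => True) A.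
Proof.
split=> H L.
  by move=> _ /large_S /H /large_S.
by move=> /large_S /(H L (fun _ _ => I)) /large_S.
Qed.

Lemma largeS_mono S L L' : (forall x, L x -> L' x) -> largeS S L -> largeS S L'.
Proof.
move=> HL [F HF]; exists F => g /HF [x xF [l [Ll ->]]].
by exists x => //; exists l; split => //; apply: HL.
Qed.

Definition subg S := S 0 /\ forall x y, S x -> S y -> S (x - y).

Lemma subgN S x : subg S -> S x -> S (- x).
Proof. by move=> [S0 SB] Sx; rewrite -sub0r; apply: SB. Qed.
Lemma subgD S x y : subg S -> S x -> S y -> S (x + y).
Proof. by move=> HS Sx Sy; rewrite -[y]opprK; apply: HS.2 => //; apply: subgN. Qed.

Lemma is_subgroup_subg S : is_subgroup S -> subg S.
Proof. by []. Qed.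

Lemma inf_index_small S A : subg S ->
  (forall D : seq G, exists y, forall d, d \in D -> ~ S (y - d)) ->
  (forall a, A a -> S a) -> small A.
Proof.
move=> HS Hinf AS L [F HF].
have [y Hy] := Hinf [seq f - f' | f <- F, f' <- F].
exists (F ++ [seq y + f | f <- F]) => g.
have [f fF [l [Ll Eg]]] := HF g.
case: (classic (A l)) => Al; last first.
  by exists f; [rewrite mem_cat fF | exists l].
have [f' f'F [l' [Ll' Eg']]] := HF (g - y).
case: (classic (A l')) => Al'; last first.
  exists (y + f'); first by rewrite mem_cat map_f ?orbT.
  exists l'; split => //; by rewrite -addrA -Eg' addrC subrK.
exfalso; apply: (Hy (f - f')); first by apply/allpairsP; exists (f, f').
have -> : y - (f - f') = l - l'.
  have -> : l = g - f by rewrite Eg addrC addKr.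
  have -> : l' = g - y - f' by rewrite Eg' addrC addKr.
  by rewrite opprB !opprD !addrA !opprK (addrAC g) subrr add0r [- f + y]addrC addrAC.
by apply: HS.2; apply: AS.
Qed.


Lemma sum_pick (M : zmodType) (r : seq G) a (F : G -> M) :
  uniq r -> a \in r -> \sum_(x <- r | a == x) F x = F a.
Proof.
move=> ur ar; rewrite (big_rem a) //= eqxx big1_seq ?addr0 // => y /andP [/eqP <-].
by rewrite mem_rem_uniqF.
Qed.

Definition coef (s : seq G) (z : 'I_(size s) -> int) x :=
  \sum_(i < size s | s`_i == x) z i.
Arguments coef : clear implicits.

Lemma collect s z : \sum_(i < size s) s`_i *~ z i =
  \sum_(x <- undup s) x *~ coef s z x.
Proof.
transitivity (\sum_(x <- undup s) \sum_(i < size s)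
                 (if s`_i == x then s`_i *~ z i else 0)); last first.
  apply: eq_bigr => x _; rewrite /coef mulrz_sumr [RHS]big_mkcond.
  by apply: eq_bigr => i _; case: eqP => // ->.
rewrite exchange_big /=; apply: eq_bigr => i _.
rewrite -big_mkcond sum_pick ?undup_uniq // mem_undup mem_nth //.
Qed.

Lemma coef_out s z x : x \notin s -> coef s z x = 0.
Proof.
move=> xs; rewrite /coef big1 // => i /eqP Ei; case/negP: xs.
by rewrite -Ei mem_nth.
Qed.

Lemma extend (M : zmodType) (t u : seq G) (F : G -> M) :
  uniq t -> uniq u -> {subset u <= t} ->
  (forall x, x \in t -> x \notin u -> F x = 0) ->
  \sum_(x <- t) F x = \sum_(x <- u) F x.
Proof.
move=> ut uu sut F0.
rewrite big_seq_cond [RHS](perm_big [seq x <- t | x \in u]); last first.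
  apply: uniq_perm => //; first exact: filter_uniq.
  by move=> x; rewrite mem_filter; case xu: (x \in u) => //=; rewrite sut.
rewrite big_filter big_mkcond [RHS]big_mkcond; apply: eq_bigr => x _.
case xu: (x \in u); first by rewrite sut.
by case xt: (x \in t) => //=; rewrite F0 ?xu.
Qed.

Lemma sum_ord (M : zmodType) (t : seq G) (F : G -> M) :
  \sum_(x <- t) F x = \sum_(i < size t) F t`_i.
Proof. by rewrite (big_nth 0) big_mkord. Qed.

Lemma free_elem B t (d : G -> int) : free_basis B -> uniq t ->
  (forall x, x \in t -> B x) -> \sum_(x <- t) x *~ d x = 0 ->
  forall x, x \in t -> d x = 0.
Proof.
move=> [_ HB] ut tB; rewrite sum_ord => H0 x xt.
have := HB t (fun i => d t`_i) ut tB H0 (Ordinal (etrans (index_mem x t) xt)).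
by rewrite /= nth_index.
Qed.

Definition Dbl (y : G) := exists g : G, y = g + g.

Lemma subg_Dbl : subg Dbl.
Proof.
split; first by exists 0; rewrite addr0.
by move=> _ _ [a ->] [b ->]; exists (a - b); rewrite opprD addrACA.
Qed.

Lemma rep_basis B (g : G) : free_basis B -> exists (s : seq G) (z : G -> int), (forall x, x \in s -> B x) /\
  uniq s /\ g = \sum_(x <- s) x *~ z x.
Proof.
move=> [HB _]; have [s [z [sB ->]]] := HB g.
exists (undup s), (coef s z); split; first by move=> x; rewrite mem_undup; exact: sB.
by split; [exact: undup_uniq | exact: collect].
Qed.

Lemma int_dbl (c : int) : c + c = 0 -> c = 0.
Proof. by case: c => n //= [] /eqP; rewrite ?addnn ?double_eq0 => /eqP ->. Qed.

Lemma int_dbl1 (c : int) : c + c <> 1.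
Proof.
case: c => n //= [].
by rewrite addnn => /(congr1 odd); rewrite odd_double.
Qed.

Lemma torsion_free B g : free_basis B -> g + g = 0 -> g = 0.
Proof.
move=> HB; have [s [z [sB [us ->]]]] := rep_basis g HB.
rewrite -big_split /=.
under eq_bigr do rewrite -mulrzDr.
move=> /(free_elem HB us sB) H; apply: big1_seq => x /andP [_ xs].
by rewrite (int_dbl (H x xs)).
Qed.


Lemma sum_single (t : seq G) b (F : G -> G) : uniq t -> b \in t ->
  \sum_(x <- t) (if x == b then F x else 0) = F b.
Proof.
move=> ut bt; rewrite (extend (u := [:: b])) ?big_seq1 ?eqxx //.
  by move=> x; rewrite inE => /eqP ->.
by move=> x _; rewrite inE => /negbTE ->.
Qed.

Lemma basis_dist B b b' : free_basis B -> B b -> B b' -> b != b' -> ~ Dbl (b - b').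
Proof.
move=> HB Bb Bb' nbb' [g E].
have [s [z [sB [us Eg]]]] := rep_basis g HB.
pose z' x := if x \in s then z x else 0.
pose t := undup [:: b, b' & s].
pose d x := (if x == b then 1 else 0) - (if x == b' then 1 else 0) - (z' x + z' x).
have ut : uniq t by exact: undup_uniq.
have bt : b \in t by rewrite mem_undup inE eqxx.
have b't : b' \in t by rewrite mem_undup !inE eqxx orbT.
have tB : forall x, x \in t -> B x.
  by move=> x; rewrite mem_undup !inE => /orP [/eqP -> //| /orP [/eqP -> //|]]; exact: sB.
have Hz : \sum_(x <- t) x *~ z' x = g.
  rewrite Eg (extend (u := s)) //.
  - by apply: eq_big_seq => x xs; rewrite /z' xs.
  - by move=> x xs; rewrite mem_undup !inE xs !orbT.
  - by move=> x _ /negbTE xs; rewrite /z' xs.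
have H0 : \sum_(x <- t) x *~ d x = 0.
  rewrite /d.
  under eq_bigr do rewrite !mulrzBr mulrzDr.
  rewrite !sumrB big_split /= Hz.
  have E1 : forall c, \sum_(x <- t) x *~ (if x == c then 1 else 0) =
                      \sum_(x <- t) (if x == c then x else 0).
    by move=> c; apply: eq_bigr => x _; case: eqP.
  rewrite !E1 !sum_single // -E.
  by rewrite subrr.
have := free_elem HB ut tB H0 bt.
rewrite /d eqxx (negbTE nbb') subr0.
move=> /eqP; rewrite subr_eq0 => /eqP E2.
by apply: (@int_dbl1 (z' b)).
Qed.


Lemma new_basis B : free_basis B -> ~ finitely_generated G ->
  forall P : seq G, uniq P -> (forall x, x \in P -> B x) -> exists b, B b /\ b \notin P.
Proof.
move=> HB nfg P uP PB; apply: NNPP => Hn; apply: nfg; exists P => g.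
have BP : forall b, B b -> b \in P.
  by move=> b Bb; apply: NNPP => /negP nb; apply: Hn; exists b.
have [s [z [sB [us ->]]]] := rep_basis g HB.
pose z' x := if x \in s then z x else 0.
exists (fun i => z' P`_i); rewrite -(sum_ord P (fun x => x *~ z' x)).
rewrite [RHS](extend (u := s)) //.
- by apply: eq_big_seq => x xs; rewrite /z' xs.
- by move=> x /sB /BP.
- by move=> x _ /negbTE xs; rewrite /z' xs.
Qed.

Lemma many_basis B : free_basis B -> ~ finitely_generated G ->
  forall k, exists P : seq G, [/\ uniq P, (forall x, x \in P -> B x) & size P = k].
Proof.
move=> HB nfg; elim=> [|k [P [uP PB sP]]]; first by exists [::].
have [b [Bb bP]] := new_basis HB nfg uP PB.
exists (b :: P); split => //=; first by rewrite bP.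
  by move=> x; rewrite inE => /orP [/eqP -> //|]; exact: PB.
by rewrite sP.
Qed.

Lemma pigeon B : free_basis B -> forall D P : seq G, uniq P -> (forall x, x \in P -> B x) ->
  (size D < size P)%N -> exists2 b, b \in P & forall d, d \in D -> ~ Dbl (b - d).
Proof.
move=> HB; elim=> [|d D IH] P uP PB sDP.
  by case: P uP PB sDP => // b P _ _ _; exists b; rewrite ?inE ?eqxx.
case: (classic (exists2 b0, b0 \in P & Dbl (b0 - d))) => [[b0 b0P Db0]|nb].
  have sDP' : (size D < size (rem b0 P))%N by rewrite size_rem //; case: (size P) sDP.
  have PB' : forall x, x \in rem b0 P -> B x by move=> x /mem_rem; exact: PB.
  have [b bP Hb] := IH _ (rem_uniq b0 uP) PB' sDP'.
  exists b; first exact: mem_rem bP.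
  move=> e; rewrite inE => /orP [/eqP -> Dbd|]; last exact: Hb.
  have nbb0 : b != b0 by move: bP; rewrite mem_rem_uniq // inE => /andP [].
  apply: (basis_dist HB (PB _ (mem_rem bP)) (PB _ b0P) nbb0).
  have -> : b - b0 = (b - d) - (b0 - d) by rewrite opprB addrA subrK.
  exact: subg_Dbl.2.
have [b bP Hb] := IH _ uP PB (ltnW sDP).
exists b => // e; rewrite inE => /orP [/eqP -> Dbd|]; last exact: Hb.
by apply: nb; exists b.
Qed.

Lemma part2 : infinite_group G -> free_abelian G -> ~ finitely_generated G ->
  ~ auto_invariant (@small_family G).
Proof.
move=> _ [B HB] nfg [_ Hai].
pose h (x : G) := x + x.
have hadd : forall x y, h (x + y) = h x + h y by move=> x y; rewrite /h addrACA.
have hinj : injective h.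
  move=> x y; rewrite /h => E; apply/eqP; rewrite -subr_eq0; apply/eqP.
  apply: (torsion_free HB); by rewrite addrACA -opprD E subrr.
have := Hai h hadd hinj (fun _ => True) (fun _ _ => I).
case=> _ /(_ _) Hs.
have : small_family (fun _ : G => True).
  apply: Hs; apply: (inf_index_small subg_Dbl).
    move=> D; have [P [uP PB sP]] := many_basis HB nfg (size D).+1.
    have sDP : (size D < size P)%N by rewrite sP.
    have [b _ Hb] := pigeon HB uP PB sDP.
    by exists b.
  by move=> a [x _ ->]; exists x.
move=> /(_ (fun _ => True)) [].
  by exists [:: 0] => g; exists 0; rewrite ?inE // ; exists g; rewrite add0r.
move=> F /(_ 0) [x _ [l [[_ H] _]]]; exact: H.
Qed.


Lemma sum_flat_nseq (I : Type) (r : seq I) (c : I -> nat) (e : I -> G) :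
  \sum_(x <- flatten [seq nseq (c i) (e i) | i <- r]) x = \sum_(i <- r) e i *+ c i.
Proof.
by rewrite big_flatten big_map; apply: eq_bigr => i _; rewrite big_nseq iter_addr_0.
Qed.

Lemma size_flat_nseq (I : Type) (r : seq I) (c : I -> nat) (e : I -> G) :
  size (flatten [seq nseq (c i) (e i) | i <- r]) = (\sum_(i <- r) c i)%N.
Proof. by elim: r => [|i r IH] /=; rewrite ?big_nil ?big_cons // size_cat size_nseq IH. Qed.

Lemma all_flat_nseq (I : Type) (r : seq I) (c : I -> nat) (e : I -> G) (P : pred G) :
  (forall i, P (e i)) -> all P (flatten [seq nseq (c i) (e i) | i <- r]).
Proof.
move=> HP; elim: r => [|i r IH] //=; rewrite all_cat IH andbT.
by apply/allP => x /nseqP [-> _].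
Qed.

Definition words (t : seq G) := forall g, exists w : seq G, all (mem t) w /\ g = \sum_(x <- w) x.

Lemma fg_words : finitely_generated G -> exists t, words t.
Proof.
move=> [s Hs]; exists (s ++ map -%R s) => g.
have [z ->] := Hs g.
pose e (i : 'I_(size s)) := if (0 <= z i)%R then s`_i else - s`_i.
exists (flatten [seq nseq (absz (z i)) (e i) | i <- index_enum 'I_(size s)]).
split.
  apply: all_flat_nseq => i; rewrite /e; case: ifP => _ /=.
    by rewrite mem_cat mem_nth.
  by rewrite mem_cat map_f ?orbT // mem_nth.
rewrite sum_flat_nseq; apply: eq_bigr => i _; rewrite /e.
case: (z i) => m /=; first by rewrite pmulrn.
by rewrite NegzE mulrNz mulNrn.
Qed.

Definition comb (t : seq G) (u : 'I_(size t) -> nat) := \sum_(i < size t) t`_i *+ u i.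
Arguments comb : clear implicits.

Definition Ball (t : seq G) (N : nat) : seq G :=
  undup [seq comb t (fun i => val (f i)) | f : {ffun 'I_(size t) -> 'I_N}].

Lemma memBall t N x : reflect (exists u, (forall i, u i < N)%N /\ x = comb t u) (x \in Ball t N).
Proof.
apply: (iffP idP).
  rewrite mem_undup => /mapP [f _ ->]; by exists (fun i => val (f i)); split => // i; exact: ltn_ord.
move=> [u [uN ->]]; rewrite mem_undup; apply/mapP.
exists [ffun i => Ordinal (uN i)]; first by rewrite mem_enum.
by rewrite /comb; apply: eq_bigr => i _; rewrite ffunE.
Qed.

Lemma uniq_Ball t N : uniq (Ball t N).
Proof. exact: undup_uniq. Qed.

Lemma Ball_mono t M N x : (M <= N)%N -> x \in Ball t M -> x \in Ball t N.
Proof.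
move=> MN /memBall [u [uM ->]]; apply/memBall; exists u; split => // i.
exact: leq_trans (uM i) MN.
Qed.

Lemma Ball0 t N : (0 < N)%N -> 0 \in Ball t N.
Proof.
move=> N0; apply/memBall; exists (fun _ => 0%N); split => //.
by rewrite /comb big1.
Qed.

Lemma BallD t (M N : nat) (x y : G) : x \in Ball t M -> y \in Ball t N -> x + y \in Ball t (M + N).
Proof.
move=> /memBall [u [uA ->]] /memBall [v [vB ->]]; apply/memBall.
exists (fun i => u i + v i)%N; split.
  by move=> i; rewrite -addSn leq_add // ltnW.
by rewrite /comb -big_split; apply: eq_bigr => i _; rewrite mulrnDr.
Qed.

Lemma word_Ball t w : all (mem t) w -> \sum_(x <- w) x \in Ball t (size w).+1.
Proof.
move=> /allP wt; apply/memBall.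
exists (fun i : 'I_(size t) => count (fun x => index x t == i) w); split.
  by move=> i; rewrite ltnS count_size.
elim: w wt => [|a w IH] wt; first by rewrite big_nil /comb big1.
rewrite big_cons IH; last by move=> x xw; apply: wt; rewrite inE xw orbT.
have at_ : a \in t by apply: wt; rewrite inE eqxx.
rewrite /comb /= -[X in X + _](nth_index 0 at_).
rewrite (bigD1 (Ordinal (etrans (index_mem a t) at_))) //= [in RHS](bigD1 (Ordinal (etrans (index_mem a t) at_))) //=.
rewrite eqxx add1n mulrS addrA; congr (_ + _).
apply: eq_bigr => i ni; congr (_ *+ _); rewrite /=.
suff -> : (index a t == i) = false by [].
by apply/negbTE; apply: contra ni => /eqP E; apply/eqP/val_inj.
Qed.

Lemma size_Ball t N : (size (Ball t N) <= N ^ size t)%N.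
Proof.
apply: leq_trans (size_undup _) _; rewrite size_map -cardE card_ffun !card_ord //.
Qed.

Lemma Ball_double t q N : (0 < N)%N ->
  (size (Ball t (q * N)) <= q ^ size t * size (Ball t N))%N.
Proof.
move=> N0.
pose E := [seq comb t (fun i => (val (f i) * N)%N) | f : {ffun 'I_(size t) -> 'I_q}].
have sE : size E = (q ^ size t)%N by rewrite size_map -cardE card_ffun !card_ord.
rewrite -sE -(size_allpairs (fun a b : G => a + b)); apply: uniq_leq_size; first exact: uniq_Ball.
move=> x /memBall [u [uq ->]].
have Hd : forall i, (u i %/ N < q)%N by move=> i; rewrite ltn_divLR.
have -> : comb t u = comb t (fun i => (val (Ordinal (Hd i)) * N)%N) + comb t (fun i => u i %% N)%N.
  rewrite /comb -big_split; apply: eq_bigr => i _ /=.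
  by rewrite -mulrnDr -divn_eq.
apply: allpairs_f.
  by apply/mapP; exists [ffun i => Ordinal (Hd i)]; rewrite ?mem_enum //; rewrite /comb; apply: eq_bigr => i _; rewrite ffunE.
by apply/memBall; exists (fun i => u i %% N)%N; split => // i; rewrite ltn_mod.
Qed.


Lemma sum_Ball t (I : Type) (r : seq I) (F : I -> G) (A : I -> nat) :
  (forall j, F j \in Ball t (A j)) -> \sum_(j <- r) F j \in Ball t (\sum_(j <- r) A j).+1.
Proof.
move=> HF; elim: r => [|j r IH]; first by rewrite !big_nil Ball0.
by rewrite !big_cons -addnS; apply: BallD.
Qed.

Lemma mul_Ball t W x v : x \in Ball t W -> x *+ v \in Ball t (v * W).+1.
Proof.
move=> xW; elim: v => [|v IH]; first by rewrite mulr0n Ball0.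
by rewrite mulrS mulSn -addnS; apply: BallD.
Qed.

Lemma comb_Ball t p (y : 'I_p -> G) (v : 'I_p -> nat) W N :
  (forall j, y j \in Ball t W) -> (forall j, v j < N)%N ->
  \sum_(j < p) y j *+ v j \in Ball t (p * (N * W).+1).+1.
Proof.
move=> yW vN; apply: (Ball_mono _ (sum_Ball _ (A := fun j => (v j * W).+1) _)).
  rewrite ltnS -[X in (_ <= X * _)%N]card_ord -sum_nat_const; apply: leq_sum => j _.
  by rewrite ltnS leq_mul2r (ltnW (vN j)) orbT.
by move=> j; apply: mul_Ball.
Qed.

Lemma ball_list t (L : seq G) : words t -> exists C, forall x, x \in L -> x \in Ball t C.
Proof.
move=> Hw; elim: L => [|a L [C HC]]; first by exists 0%N.
have [w [wt Ea]] := Hw a.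
exists (maxn C (size w).+1) => x; rewrite inE => /orP [/eqP ->|xL].
  by rewrite Ea; apply: (Ball_mono (leq_maxr _ _)); exact: word_Ball.
by apply: (Ball_mono (leq_maxl _ _)); exact: HC.
Qed.

Lemma subg_sum S (I : Type) (r : seq I) (F : I -> G) :
  subg S -> (forall j, S (F j)) -> S (\sum_(j <- r) F j).
Proof. by move=> HS HF; apply: (big_ind S HS.1) => // x y; apply: subgD. Qed.

Lemma subg_muln S x v : subg S -> S x -> S (x *+ v).
Proof. by move=> HS Sx; elim: v => [|v IH]; rewrite ?mulr0n ?mulrS; [exact: HS.1| exact: subgD]. Qed.

Lemma morph_sum T (psi : G -> G) (I : Type) (r : seq I) (F : I -> G) :
  subg T -> (forall a b, T a -> T b -> psi (a + b) = psi a + psi b) ->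
  (forall j, T (F j)) -> psi (\sum_(j <- r) F j) = \sum_(j <- r) psi (F j).
Proof.
move=> HT Hpsi HF; elim: r => [|j r IH].
  rewrite !big_nil; have := Hpsi 0 0 HT.1 HT.1; rewrite addr0 => /eqP.
  by rewrite -subr_eq0 opprD addrA subrr sub0r oppr_eq0 => /eqP.
by rewrite !big_cons Hpsi ?IH //; apply: subg_sum.
Qed.

Lemma morph_muln T (psi : G -> G) x v : subg T ->
  (forall a b, T a -> T b -> psi (a + b) = psi a + psi b) -> T x ->
  psi (x *+ v) = psi x *+ v.
Proof.
move=> HT Hpsi Tx; elim: v => [|v IH].
  rewrite !mulr0n; have := Hpsi 0 0 HT.1 HT.1; rewrite addr0 => /eqP.
  by rewrite -subr_eq0 opprD addrA subrr sub0r oppr_eq0 => /eqP.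
by rewrite !mulrS Hpsi ?IH //; apply: subg_muln.
Qed.


Lemma schreier (t : seq G) (T : G -> Prop) (F0 : seq G) : subg T -> (forall g, exists2 x, x \in F0 & T (g - x)) ->
  exists R : seq G, (forall r, r \in R -> T r) /\
   forall w, all (mem t) w -> exists2 x, x \in F0 & exists w',
     [/\ all (mem R) w', (size w' <= (size w).+1)%N & \sum_(y <- w) y = x + \sum_(y <- w') y].
Proof.
move=> HT Hfin.
have rep : forall g, {x | x \in F0 /\ T (g - x)}.
  move=> g; apply: constructive_indefinite_description.
  by have [x ? ?] := Hfin g; exists x.
pose r g := proj1_sig (rep g).
have rF : forall g, r g \in F0 by move=> g; case: (proj2_sig (rep g)).
have rT : forall g, T (g - r g) by move=> g; case: (proj2_sig (rep g)).
exists ([seq (x + y) - r (x + y) | x <- F0, y <- t] ++ [:: 0 - r 0]); split.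
  move=> z; rewrite mem_cat => /orP [/allpairsP [[x y] [_ _ ->]] //|].
  by rewrite inE => /eqP ->.
elim=> [|a w IH] /=.
  move=> _; exists (r 0) => //; exists [:: 0 - r 0]; split => //=.
    by rewrite andbT mem_cat inE eqxx orbT.
  by rewrite big_cons !big_nil addr0 addrC subrK.
move=> /andP [at_ wt]; have [x xF [w' [w'R sw' Ew]]] := IH wt.
exists (r (x + a)) => //; exists ((x + a) - r (x + a) :: w'); split => //=.
- rewrite w'R andbT mem_cat; apply/orP; left; exact: (allpairs_f (fun x y => x + y - r (x + y)) xF at_).
rewrite !big_cons Ew [RHS]addrA [r _ + _]addrC subrK addrA [a + x]addrC //.
Qed.

Lemma distinct_cosets S : subg S -> (forall D : seq G, exists y, forall d, d \in D -> ~ S (y - d)) ->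
  forall k, exists ys : seq G, [/\ uniq ys, size ys = k &
    forall a b, a \in ys -> b \in ys -> S (a - b) -> a = b].
Proof.
move=> HS Hinf; elim=> [|k [ys [uys sys Hys]]]; first by exists [::].
have [y Hy] := Hinf ys.
have yys : y \notin ys.
  by apply/negP => /Hy; rewrite subrr; apply; exact: HS.1.
exists (y :: ys); split => /=; [by rewrite yys | by rewrite sys |].
move=> a b; rewrite !inE => /orP [/eqP ->|aY] /orP [/eqP ->|bY] //.
- by move=> /(Hy _ bY).
- move=> Sab; exfalso; apply: (Hy _ aY).
  by rewrite -opprB; apply: subgN.
- exact: Hys.
Qed.


Lemma Ball_in T (R : seq G) N x : subg T -> (forall r, r \in R -> T r) ->
  x \in Ball R N -> T x.
Proof.
move=> HT RT /memBall [v [_ ->]]; apply: subg_sum => // j.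
by apply: subg_muln => //; apply: RT; rewrite mem_nth.
Qed.

Lemma ball_word t M g : g \in Ball t M -> exists w, [/\ all (mem t) w,
  (size w <= size t * M)%N & g = \sum_(x <- w) x].
Proof.
move=> /memBall [u [uM ->]].
exists (flatten [seq nseq (u i) t`_i | i <- index_enum 'I_(size t)]); split.
- by apply: all_flat_nseq => i; rewrite /= mem_nth.
- rewrite size_flat_nseq -[X in (_ <= X * _)%N]card_ord -sum_nat_const.
  by apply: leq_sum => i _; apply: ltnW.
- by rewrite sum_flat_nseq.
Qed.

Lemma rank_lemma (t : seq G) S T (F0 : seq G) (psi : G -> G) : words t -> subg S -> subg T ->
  (forall g, exists2 x, x \in F0 & T (g - x)) ->
  (forall a b, T a -> T b -> psi (a + b) = psi a + psi b) ->
  (forall a b, T a -> T b -> psi a = psi b -> a = b) ->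
  (forall a, T a -> S (psi a)) ->
  (forall D : seq G, exists y, forall d, d \in D -> ~ S (y - d)) -> False.
Proof.
move=> Hw HS HT Hfin Hadd Hinj HpS Hinf.
have [R [RT HR]] := schreier t HT Hfin.
have [W HW] := ball_list (map psi R) Hw.
pose p := size R; pose n := size t.
pose q := (n * (1 + p * W + p) + 2)%N.
pose k := (size F0 * q ^ p).+1.
have [ys [uys sys Hys]] := distinct_cosets HS Hinf k.
have [C HC] := ball_list ys Hw.
pose N := C.+1.
have HRj : forall j : 'I_p, psi R`_j \in Ball t W by move=> j; apply: HW; rewrite map_f // mem_nth.
pose Y := [seq y + psi rho | y <- ys, rho <- Ball R N].
pose Z := [seq a + b | a <- F0, b <- Ball R (q * N)].
have uY : uniq Y.
  apply: allpairs_uniq => //; first exact: uniq_Ball.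
  move=> [y rho] [y' rho'] /allpairsP [[a b] [ay bR [-> ->]]] /allpairsP [[a' b'] [ay' bR' [-> ->]]] /= E.
  have Tb := Ball_in HT RT bR; have Tb' := Ball_in HT RT bR'.
  have Eaa : a = a'.
    apply: Hys => //.
    have -> : a - a' = psi b' - psi b.
      have Ea : a = a' + psi b' - psi b by rewrite -E addrK.
      by rewrite Ea [a' + _]addrC (addrAC (psi b')) addrK.
    by apply: HS.2; apply: HpS.
  move: E; rewrite Eaa => /addrI /Hinj E.
  by rewrite E.
have sYZ : {subset Y <= Z}.
  move=> g /allpairsP [[y rho] [yY rhoR ->]]; rewrite /= in yY rhoR *.
  have Tr := Ball_in HT RT rhoR.
  have Hr : psi rho \in Ball t (p * (N * W).+1).+1.
    move/memBall: rhoR => [v [vN Erho]].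
    rewrite Erho /comb (morph_sum _ HT Hadd); last by move=> j; apply: subg_muln => //; apply: RT; rewrite mem_nth.
    rewrite (eq_bigr (fun j : 'I_(size R) => psi R`_j *+ v j)); first exact: comb_Ball.
    by move=> j _; exact: (morph_muln (v j) HT Hadd (RT _ (mem_nth 0 (ltn_ord j)))).
  have := BallD (HC y yY) Hr.
  move=> /ball_word [w [wt sw Ew]]; rewrite Ew.
  have [x xF [w' [w'R sw' Ew']]] := HR w wt.
  rewrite Ew'; apply: allpairs_f => //.
  apply: Ball_mono (word_Ball w'R).
  apply: leq_trans (_ : (n * (C + (p * (N * W).+1).+1) + 2 <= q * N)%N).
    apply: (@leq_trans (size w).+2); first by rewrite ltnS. by rewrite -addn2 leq_add2r.
  rewrite /q /N; apply/leP; rewrite -!plusE -!multE; have := ltnSn C; move/ltP; nia.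
have := uniq_leq_size uY sYZ.
rewrite !size_allpairs sys.
have sN : (0 < size (Ball R N))%N by case: (Ball R N) (Ball0 R (ltn0Sn C)).
have := Ball_double R q (ltn0Sn C).
move=> H1 H2; have := leq_trans H2 (leq_mul (leqnn (size F0)) H1).
by rewrite mulnA leq_pmul2r // ltnn.
Qed.


Lemma smallS_mono S A A' : smallS S A -> (forall a, A' a -> A a) -> smallS S A'.
Proof.
move=> HA sub L LS /(HA L LS); apply: largeS_mono => x [Lx nAx]; by split => // /sub.
Qed.

Lemma smallS_U S A A' : smallS S A -> smallS S A' -> smallS S (fun a => A a \/ A' a).
Proof.
move=> HA HA' L LS /(HA L LS) /(HA' _ (fun l (lL : L l /\ ~ A l) => LS l (proj1 lL))).
by apply: largeS_mono => x [[Lx nAx] nA'x]; split => // [[]].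
Qed.

Lemma smallS_tr S A x : subg S -> S x -> smallS S A -> smallS S (fun a => A (x + a)).
Proof.
move=> HS Sx HA L LS [F HF].
have L2S : forall y, L (y - x) -> S y.
  by move=> y /LS Sy; rewrite -(subrK x y); apply: subgD.
have : largeS S (fun y => L (y - x)).
  exists [seq f - x | f <- F] => g /HF [f fF [l [Ll ->]]].
  exists (f - x); first exact: map_f.
  by exists (l + x); rewrite addrK; split => //; rewrite addrA addrAC subrK.
move=> /(HA _ L2S) [F2 HF2].
exists [seq f + x | f <- F2] => g /HF2 [f fF [y [[Ly nAy] ->]]].
exists (f + x); first exact: map_f.
exists (y - x); split; [split => // | by rewrite -addrA [x + _]addrC subrK].
by rewrite addrC subrK.
Qed.

Lemma small_mono A A' : small A -> (forall a, A' a -> A a) -> small A'.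
Proof. by move=> /small_S H sub; apply/small_S; apply: smallS_mono H sub. Qed.

Lemma left_inv_small : left_invariant (@small_family G).
Proof.
move=> A x /small_S HA; apply/small_S.
have sT : subg (fun _ : G => True) by [].
apply: (smallS_mono (smallS_tr (x := - x) sT I HA)).
by move=> a [b Ab ->]; rewrite addKr.
Qed.

Definition fin_index S := exists F0 : seq G, forall g, exists2 x, x \in F0 & S (g - x).

Lemma E1 S A : fin_index S -> small A -> smallS S A.
Proof.
move=> [F0 H0] HA L LS [F HF]; have : large L.
  exists [seq a + b | a <- F0, b <- F] => g.
  have [x0 x0F Sg] := H0 g; have [f fF [l [Ll El]]] := HF _ Sg.
  exists (x0 + f); first exact: allpairs_f.
  by exists l; split => //; rewrite -addrA -El addrC subrK.
move=> /HA [F2 HF2]; exists F2 => g _; exact: HF2.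
Qed.

Lemma E2 S A : subg S -> fin_index S -> (forall a, A a -> S a) -> smallS S A -> small A.
Proof.
move=> HS [F0 H0] AS HA L [F HF].
pose A' a := exists2 x, x \in F0 & S x /\ A (x + a).
have HA'' : forall F1 : seq G, smallS S (fun a => exists2 x, x \in F1 & S x /\ A (x + a)).
  elim=> [|x F1 IH].
    by apply: smallS_mono HA _ => a [].
  case: (classic (S x)) => Sx.
    apply: smallS_mono (smallS_U (smallS_tr HS Sx HA) IH) _.
    move=> a [y]; rewrite inE => /orP [/eqP -> [_ Ha]|yF Hy]; first by left.
    by right; exists y.
  apply: smallS_mono IH _ => a [y]; rewrite inE => /orP [/eqP -> [//]|yF Hy].
  by exists y.
have HA' : smallS S A' := HA'' F0.
pose M m := S m /\ exists2 x, x \in F0 & L (x + m).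
have MS : forall m, M m -> S m by move=> m [].
have : largeS S M.
  exists [seq a + b | a <- F, b <- F0] => g Sg.
  have [f fF [l [Ll El]]] := HF g.
  have [x xF Slx] := H0 l.
  exists (f + x); first exact: allpairs_f.
  exists (l - x); split; last by rewrite El -addrA [x + _]addrC subrK.
  by split => //; exists x => //; rewrite addrC subrK.
move=> /(HA' _ MS) [F1 HF1].
exists [seq a + b | a <- [seq a + b | a <- F0, b <- F1], b <- map -%R F0] => g.
have [x0 x0F Sg] := H0 g.
have [f1 f1F [m [[[Sm [x xF Lxm]] nA'm] Em]]] := HF1 _ Sg.
exists (x0 + f1 - x).
  by apply: allpairs_f; [exact: allpairs_f | exact: map_f].
exists (x + m); split; last first. by rewrite addrA subrK -addrA -Em addrC subrK.
split => // Axm; apply: nA'm; exists x => //; split => //.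
by have := HS.2 _ _ (AS _ Axm) Sm; rewrite addrK.
Qed.


Lemma transport X Y (f : G -> G) L : subg X ->
  (forall a b, X a -> X b -> f (a + b) = f a + f b) ->
  (forall y, Y y -> exists2 x, X x & y = f x) -> (forall l, L l -> X l) ->
  largeS X L -> largeS Y (Defs.image f L).
Proof.
move=> HX Hadd Hsurj LX [F HF]; exists (map f F) => y /Hsurj [g Xg ->].
have [x xF [l [Ll El]]] := HF g Xg.
have Xx : X x by rewrite -(addrK l x) -El; apply: HX.2 => //; apply: LX.
exists (f x); first exact: map_f.
by exists (f l); split; [exists l | rewrite El Hadd //; exact: LX].
Qed.

Lemma iso_inv H K (h : G -> G) : subg H -> subg K -> subgroup_iso H K h ->
  exists k : G -> G, [/\ (forall y, K y -> H (k y)), (forall y, K y -> h (k y) = y),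
     (forall x, H x -> k (h x) = x) & subgroup_iso K H k].
Proof.
move=> HH HK [hadd [hinj [hK hsurj]]].
have ex : forall y, {x | K y -> H x /\ y = h x}.
  move=> y; apply: constructive_indefinite_description.
  case: (classic (K y)) => Ky; last by exists 0.
  by have [x Hx ->] := hsurj y Ky; exists x.
pose k y := proj1_sig (ex y).
have kH : forall y, K y -> H (k y) by move=> y Ky; case: (proj2_sig (ex y) Ky).
have hk : forall y, K y -> h (k y) = y by move=> y Ky; case: (proj2_sig (ex y) Ky).
have kh : forall x, H x -> k (h x) = x by move=> x Hx; apply: hinj => //; [apply: kH; exact: hK | rewrite hk //; exact: hK].
exists k; split => //; split; [|split; [|split]].
- move=> a b Ka Kb; have Kab := subgD HK Ka Kb.
  apply: hinj; [exact: kH | exact: (subgD HH (kH _ Ka) (kH _ Kb)) |].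
  by rewrite (hk _ Kab) (hadd _ _ (kH _ Ka) (kH _ Kb)) (hk _ Ka) (hk _ Kb).
- by move=> a b Ka Kb E; rewrite -(hk a Ka) -(hk b Kb) E.
- exact: kH.
- by move=> x Hx; exists (h x); [exact: hK | rewrite kh].
Qed.

Lemma not_fin_inf S : ~ fin_index S -> forall D : seq G, exists y, forall d, d \in D -> ~ S (y - d).
Proof.
move=> nf D; apply: NNPP => nex; apply: nf; exists D => g.
apply: NNPP => ng; apply: nex; exists g => d dD Sgd; apply: ng; by exists d.
Qed.

Lemma main_M H K (h : G -> G) A : finitely_generated G -> subg H -> subg K ->
  subgroup_iso H K h -> (forall a, A a -> H a) -> small A -> small (Defs.image h A).
Proof.
move=> fg HH HK iso AH sA.
have [hadd [hinj [hK hsurj]]] := iso.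
have [k [kH hk kh [kadd [kinj [kK ksurj]]]]] := iso_inv HH HK iso.
case: (classic (fin_index K)) => finK; last first.
  apply: (inf_index_small HK (not_fin_inf finK)).
  by move=> _ [a Aa ->]; apply: hK; apply: AH.
case: (classic (fin_index H)) => finH; last first.
  have [t Ht] := fg_words fg.
  have [F0 HF0] := finK.
  exfalso; apply: (rank_lemma Ht HH HK HF0 kadd kinj kK (not_fin_inf finH)).
apply: (E2 HK finK); first by move=> _ [a Aa ->]; apply: hK; apply: AH.
have sAH := E1 finH sA.
move=> L' L'K HL'.
have LH : forall l, Defs.image k L' l -> H l by move=> _ [l' Ll' ->]; apply: kH; apply: L'K.
have HL := transport HK kadd ksurj L'K HL'.
have := sAH _ LH HL.
move=> /(transport HH hadd hsurj (fun l (Hl : Defs.image k L' l /\ ~ A l) => LH l (proj1 Hl))).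
apply: largeS_mono => _ [l [[l' Ll' ->] nAl] ->]; rewrite hk; last exact: L'K.
split => // [[a Aa]]; rewrite -(hk _ (L'K _ Ll')) => E.
by apply: nAl; rewrite -(hinj _ _ (AH _ Aa) (kH _ (L'K _ Ll')) (esym E)).
Qed.

Lemma part1 : finitely_generated G -> strongly_invariant (@small_family G).
Proof.
move=> fg; split; first exact: left_inv_small.
move=> H K h HH HK iso A AH; split; first by move=> sA; exact: (main_M fg HH HK iso AH sA).
have [k [kH hk kh isok]] := iso_inv HH HK iso.
move=> sIA.
have AK : forall a, Defs.image h A a -> K a.
  by move=> _ [a Aa ->]; apply: iso.2.2.1; apply: AH.
have sA := main_M fg HK HH isok AK sIA.
apply: small_mono sA _ => a Aa; exists (h a); first by exists a.
by rewrite kh //; apply: AH.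
Qed.

End Gen.

Theorem proposition5p8 (G : zmodType) :
  infinite_group G ->
  (finitely_generated G -> strongly_invariant (@small_family G)) /\
  (free_abelian G -> ~ finitely_generated G -> ~ auto_invariant (@small_family G)).
Proof.
move=> inf; split; first exact: part1.
exact: part2.
Qed.
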